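(* Assume Assumptions A, B, C hold, let $w^{(t)}$ be generated by Algorithm 1 with $\eta^{(t)}=D\sqrt{\varepsilon}$ ($D>0$), and suppose $\alpha_i^{(t)}\le\alpha/L_\phi$ for some $\alpha\in(0,\tfrac13)$. Then for all $i\in[n]$ and $0\le t<T$, $$\|h(w^{(t+1)};i)-h_i^*\|^2\le(1+\varepsilon)\|h(w^{(t)};i)-h_i^*\|^2-2(1-3\alpha)\alpha_i^{(t)}\big[\phi_i(h(w^{(t)};i))-\phi_i(h_i^* )\big]+\frac{3\varepsilon+2}{4}c\big(4+(V+2)GD^2\big)^2\varepsilon+\frac{3\varepsilon+2}{\varepsilon}\big\|\eta^{(t)}H_i^{(t)}v_{*\mathrm{reg}}^{(t)}-\alpha_i^{(t)}\nabla\phi_i(h(w^{(t)};i))\big\|^2.$$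
   Context: Let $n,c,d$ be positive integers and $[n]=\{1,\dots,n\}$. For each $i\in[n]$ let $h(\cdot;i):\mathbb{R}^d\to\mathbb{R}^c$ (components $h_j(\cdot;i)$) and $\phi_i:\mathbb{R}^c\to\mathbb{R}$. Each $\phi_i$ attains its minimum at $h_i^*$. Norms: Euclidean for vectors, operator for matrices. Assumption A: each $\phi_i$ is convex, bounded below, and $L_\phi$-smooth. Assumption B: each $h(\cdot;i)$ is twice continuously differentiable and there is $G>0$ with $\|\nabla_w^2 h_j(w;i)\|\le G$ for all $w,i,j$. Iteration setup: given $\varepsilon>0$, $\eta^{(t)}>0$, $\alpha_i^{(t)}>0$ and iterates $w^{(t)}$, let $H_i^{(t)}$ be the Jacobian of $h(\cdot;i)$ at $w^{(t)}$, $\Phi^{(t)}(v)=\frac{1}{2n}\sum_{i=1}^n\|\eta^{(t)}H_i^{(t)}v-\alpha_i^{(t)}\nabla\phi_i(h(w^{(t)};i))\|^2$, $\Psi^{(t)}(v)=\Phi^{(t)}(v)+\frac{\varepsilon^2}{2}\|v\|^2$, $v_{*\mathrm{reg}}^{(t)}$ its unique minimizer. Algorithm 1: $w^{(0)}$ arbitrary, $w^{(t+1)}=w^{(t)}-\eta^{(t)}v_{*\mathrm{reg}}^{(t)}$, $t=0,\dots,T-1$. Assumption C (constant $V>0$): for each $0\le t<T$ there is $\hat v^{(t)}$ with $\|\hat v^{(t)}\|^2\le V$ and $\Phi^{(t)}(\hat v^{(t)})\le\varepsilon^2$. *)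

(* Defs.v *)
From HB Require Import structures.
From mathcomp Require Import all_boot all_order all_algebra.
From mathcomp Require Import all_classical all_reals all_analysis.
Set Implicit Arguments. Unset Strict Implicit. Unset Printing Implicit Defensive.
Import Order.TTheory GRing.Theory Num.Theory.
Import numFieldNormedType.Exports.
Local Open Scope ring_scope.

Section Defs.
Variable R : realType.

Definition sqnorm {k : nat} (v : 'cV[R]_k) : R := \sum_(j < k) (v j 0) ^+ 2.
Definition enorm {k : nat} (v : 'cV[R]_k) : R := Num.sqrt (sqnorm v).

Definition ebase {k : nat} (j : 'I_k) : 'cV[R]_k := delta_mx j 0.

Definition coordf {d c : nat} (f : 'cV[R]_d -> 'cV[R]_c) (j : 'I_c) : 'cV[R]_d -> R :=
  fun w => f w j 0.

Definition gradv {k : nat} (f : 'cV[R]_k -> R) (x : 'cV[R]_k) : 'cV[R]_k :=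
  \col_(j < k) ('D_(ebase j) f x).

Definition jacmx {d c : nat} (f : 'cV[R]_d -> 'cV[R]_c) (w : 'cV[R]_d) : 'M[R]_(c, d) :=
  \matrix_(j < c, k < d) ('D_(ebase k) (coordf f j) w).

Definition hessmx {d : nat} (g : 'cV[R]_d -> R) (w : 'cV[R]_d) : 'M[R]_d :=
  \matrix_(k < d, l < d) ('D_(ebase l) (fun x => 'D_(ebase k) g x) w).

Definition opnorm_le {k : nat} (A : 'M[R]_k) (G : R) : Prop :=
  forall u : 'cV[R]_k, enorm (A *m u) <= G * enorm u.

Definition convex_fun {k : nat} (f : 'cV[R]_k -> R) : Prop :=
  forall (x y : 'cV[R]_k) (s : R), 0 <= s <= 1 ->
    f (s *: x + (1 - s) *: y) <= s * f x + (1 - s) * f y.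

Definition bounded_below {k : nat} (f : 'cV[R]_k -> R) : Prop :=
  exists m : R, forall x, m <= f x.

Definition L_smooth {k : nat} (L : R) (f : 'cV[R]_k -> R) : Prop :=
  (forall x, differentiable f x) /\
  forall x y, enorm (gradv f x - gradv f y) <= L * enorm (x - y).

Definition C2 {d : nat} (g : 'cV[R]_d -> R) : Prop :=
  (forall w, differentiable g w) /\
  (forall k : 'I_d, forall w, differentiable (fun x => 'D_(ebase k) g x) w) /\
  (forall k l : 'I_d, continuous (fun w => 'D_(ebase l) (fun x => 'D_(ebase k) g x) w)).

(* Phi^{(t)}(v) with data eta, alpha_i, H_i, g_i = gradv phi_i(h(w;i)) *)
Definition Phi {n d c : nat} (eta : R) (alpha : 'I_n -> R)
  (H : 'I_n -> 'M[R]_(c, d)) (g : 'I_n -> 'cV[R]_c) (v : 'cV[R]_d) : R :=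
  (2 * n%:R)^-1 * \sum_(i < n) sqnorm (eta *: (H i *m v) - alpha i *: g i).

Definition Psi {n d c : nat} (eps eta : R) (alpha : 'I_n -> R)
  (H : 'I_n -> 'M[R]_(c, d)) (g : 'I_n -> 'cV[R]_c) (v : 'cV[R]_d) : R :=
  Phi eta alpha H g v + eps ^+ 2 / 2 * sqnorm v.

End Defs.

(* Main.v *)
Require Import Defs.
From HB Require Import structures.
From mathcomp Require Import all_boot all_order all_algebra.
From mathcomp Require Import all_classical all_reals all_analysis.
From mathcomp Require Import ring lra.
Import Order.TTheory GRing.Theory Num.Theory.
Import numFieldNormedType.Exports.
Set Implicit Arguments. Unset Strict Implicit. Unset Printing Implicit Defensive.
Local Open Scope ring_scope.

Section H.
Local Open Scope classical_set_scope.
Variable R : realType.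

Lemma mono_le (f df : R -> R) (a b : R) : a <= b -> (forall x : R, is_derive x (1:R) f (df x)) ->
  (forall x : R, a < x < b -> df x <= 0) -> f b <= f a.
Proof.
move=> ab fd dn; case: (ltgtP a b) ab => // [altb|->] _; last by [].
have [c cab E] := MVT altb (fun x _ => fd x)
  (derivable_within_continuous (fun x _ => @ex_derive _ _ _ _ _ _ _ (fd x))).
have : df c * (b - a) <= 0.
  apply: mulr_le0_ge0; last by rewrite subr_ge0 ltW.
  by apply: dn; move: cab; rewrite in_itv /=.
lra.
Qed.

Lemma line_derive k (f : 'cV[R]_k -> R) x d s : derivable f (x + s *: d) d ->
  is_derive s 1 (fun u : R => f (x + u *: d)) ('D_d f (x + s *: d)).
Proof.
move=> df.
have E : (fun h : R => h^-1 *: (((fun u : R => f (x + u *: d)) \o shift s) (h *: 1) - f (x + s *: d)))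
  = (fun h : R => h^-1 *: ((f \o shift (x + s *: d)) (h *: d) - f (x + s *: d))).
  apply/funext => h /=; congr (_ *: (f _ - _)).
  by rewrite [h *: 1]mulr1 scalerDl addrCA addrC.
apply: DeriveDef; first by rewrite /derivable E.
by rewrite /derive E.
Qed.


Definition dotv {k : nat} (p q : 'cV[R]_k) : R := \sum_(j < k) p j 0 * q j 0.

Lemma vec_decomp k (v : 'cV[R]_k) : v = \sum_(j < k) v j 0 *: ebase R j.
Proof.
apply/matrixP => i l; rewrite summxE (bigD1 i) //= big1 => [|j ji].
  by rewrite !mxE ord1 !eqxx /= mulr1 addr0.
by rewrite !mxE eq_sym (negbTE ji) /= mulr0.
Qed.

Lemma dirD k (f : 'cV[R]_k -> R) a v : differentiable f a ->
  'D_v f a = dotv v (gradv f a).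
Proof.
move=> df; rewrite deriveE // [in LHS](vec_decomp v) linear_sum.
apply: eq_bigr => j _; rewrite linearZ /= -deriveE // mxE.
by [].
Qed.


Lemma sqnorm_ge0 k (v : 'cV[R]_k) : 0 <= sqnorm v.
Proof. by apply: sumr_ge0 => j _; rewrite sqr_ge0. Qed.

Lemma sqnorm_dot k (v : 'cV[R]_k) : sqnorm v = dotv v v.
Proof. by apply: eq_bigr => j _; rewrite expr2. Qed.

Lemma sqnorm_eq0 k (v : 'cV[R]_k) : sqnorm v = 0 -> forall j, v j 0 = 0.
Proof.
move=> /eqP; rewrite psumr_eq0 /=; last by move=> j _; rewrite sqr_ge0.
move=> /allP H j; have := H j (mem_index_enum j); rewrite sqrf_eq0.
by move=> /eqP.
Qed.

Lemma quad_exp k (a b : 'cV[R]_k) (t : R) :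
  \sum_(j < k) (t * a j 0 - b j 0) ^+ 2 = t ^+ 2 * sqnorm a - 2 * t * dotv a b + sqnorm b.
Proof.
rewrite /sqnorm /dotv !mulr_sumr -sumrB -big_split /=.
by apply: eq_bigr => j _; ring.
Qed.

Lemma CS k (a b : 'cV[R]_k) : dotv a b <= enorm a * enorm b.
Proof.
have [A0|Apos] := eqVneq (sqnorm a) 0.
  have := sqnorm_eq0 A0 => a0.
  rewrite /dotv big1 => [|j _]; last by rewrite a0 mul0r.
  by rewrite mulr_ge0 // sqrtr_ge0.
have Ap : 0 < sqnorm a by rewrite lt_def Apos sqnorm_ge0.
have := quad_exp a b (dotv a b / sqnorm a).
have : 0 <= \sum_(j < k) (dotv a b / sqnorm a * a j 0 - b j 0) ^+ 2.
  by apply: sumr_ge0 => j _; rewrite sqr_ge0.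
move=> H1 H2; rewrite H2 in H1.
have H3 : dotv a b ^+ 2 <= sqnorm a * sqnorm b.
  move: H1; set x := dotv a b; set A := sqnorm a; set B := sqnorm b => H1.
  have H4 : A * B - x ^+ 2 = ((x / A) ^+ 2 * A - 2 * (x / A) * x + B) * A.
    by field; rewrite gt_eqF.
  have : 0 <= A * B - x ^+ 2 by rewrite H4 mulr_ge0 // ltW.
  by rewrite subr_ge0.
rewrite /enorm -sqrtrM ?sqnorm_ge0 //.
apply: le_trans (ler_norm _) _.
by rewrite -sqrtr_sqr ler_sqrt // ?mulr_ge0 ?sqnorm_ge0.
Qed.


Lemma quad_derive (a b u : R) :
  is_derive u (1:R) (fun v : R => a * v + b * (v * v)) (a + 2 * b * u).
Proof.
have E : (fun v : R => a * v + b * (v * v)) =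
  (a \*: (@id R^o)) + (b \*: ((@id R^o) * (@id R^o))).
  by apply/funext => v.
rewrite E; apply: is_derive_eq.
rewrite /= !scaler1 /GRing.scale /=; ring.
Qed.


Lemma dotvC k (p q : 'cV[R]_k) : dotv p q = dotv q p.
Proof. by apply: eq_bigr => j _; rewrite mulrC. Qed.

Lemma dotvB k (p q r : 'cV[R]_k) : dotv p (q - r) = dotv p q - dotv p r.
Proof. by rewrite /dotv -sumrB; apply: eq_bigr => j _; rewrite !mxE mulrBr. Qed.

Lemma dotvNl k (p q : 'cV[R]_k) : dotv (- p) q = - dotv p q.
Proof. by rewrite /dotv -sumrN; apply: eq_bigr => j _; rewrite !mxE mulNr. Qed.

Lemma sqnormZ k (u : R) (g : 'cV[R]_k) : sqnorm (u *: g) = u ^+ 2 * sqnorm g.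
Proof. by rewrite /sqnorm mulr_sumr; apply: eq_bigr => j _; rewrite !mxE exprMn. Qed.

Lemma enormZ k (u : R) (g : 'cV[R]_k) : 0 <= u -> enorm (u *: g) = u * enorm g.
Proof.
by move=> u0; rewrite /enorm sqnormZ sqrtrM ?sqr_ge0 // sqrtr_sqr ger0_norm.
Qed.

Lemma enorm_sq k (g : 'cV[R]_k) : enorm g * enorm g = sqnorm g.
Proof. by rewrite /enorm -expr2 sqr_sqrtr // sqnorm_ge0. Qed.

Lemma convex_grad k (f : 'cV[R]_k -> R) x y : convex_fun f -> differentiable f x ->
  dotv (y - x) (gradv f x) <= f y - f x.
Proof.
move=> cf df; rewrite -dirD //.
have dq : derivable f x (y - x) by apply: diff_derivable.
set q := (fun h : R => h^-1 *: ((f \o shift x) (h *: (y - x)) - f x)).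
have Hr : q @ 0^'+ --> 'D_(y - x) f x.
  move=> A /dq /nbhs_ballP [_ /posnumP[e] xe_A].
  by exists e%:num => //= z xe_z /gt_eqF/negbT/xe_A; exact.
apply: (cvgr_to_le Hr).
near=> h.
have h0 : 0 < h by near: h; exact: nbhs_right_gt.
have h1 : h < 1 by near: h; exact: nbhs_right_lt.
rewrite /q /=.
have := cf y x h; rewrite ltW //= ltW // => /(_ isT).
have -> : h *: y + (1 - h) *: x = h *: (y - x) + x.
  by rewrite scalerBr scalerBl scale1r -addrA [- _ + x]addrC.
move=> H.
rewrite -[h^-1 *: _]/(h^-1 * _) ler_pdivrMl // mulrBr.
move: H; rewrite mulrBl mul1r.
lra.
Unshelve. all: by end_near.
Qed.


Lemma grad_bound k (f : 'cV[R]_k -> R) L x m : 0 < L -> L_smooth L f ->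
  (forall y, m <= f y) -> sqnorm (gradv f x) <= 2 * L * (f x - m).
Proof.
move=> Lp [df lip] hm.
set g := gradv f x; set S := sqnorm g.
pose F := fun u : R => f (x + u *: (- g)).
pose Q := fun v : R => S * v + (- (L / 2) * S) * (v * v).
pose dpsi := fun u : R => 'D_(- g) f (x + u *: (- g)) + (S + 2 * (- (L / 2) * S) * u).
have Hd : forall u : R, is_derive u (1:R) (F + Q) (dpsi u).
  move=> u; apply: is_deriveD; last exact: quad_derive.
  by apply: line_derive; apply: diff_derivable.
have := mono_le (a := 0) (b := L^-1) _ Hd.
have Hneg : forall u : R, 0 < u < L^-1 -> dpsi u <= 0.
  move=> u /andP [u0 uL]; rewrite /dpsi dirD // dotvNl.
  have E : x - (x + u *: - g) = u *: g by rewrite opprD addrA subrr add0r scalerN opprK.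
  have H1 := lip x (x + u *: - g); rewrite E (enormZ _ (ltW u0)) in H1.
  have H2 := CS g (gradv f x - gradv f (x + u *: - g)).
  rewrite dotvB in H2.
  have H3 : dotv g (gradv f x) = S by rewrite /S sqnorm_dot.
  rewrite H3 in H2.
  have H4 : enorm g * enorm (gradv f x - gradv f (x + u *: - g)) <= enorm g * (L * (u * enorm g)).
    by apply: ler_wpM2l; [exact: sqrtr_ge0 | exact: H1].
  have H5 : enorm g * (L * (u * enorm g)) = L * u * S by rewrite /S -enorm_sq; ring.
  lra.
have Li : 0 < L^-1 by rewrite invr_gt0.
move=> /(_ (ltW Li) Hneg).
have EE : forall u, (F + Q) u = F u + Q u by [].
rewrite !EE /F /Q /= scale0r addr0 !mul0r !mulr0 !addr0.
have := hm (x + L^-1 *: - g).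
set fx := f x; set fy := f _ => H1 H2.
have H3 : S / L + - (L / 2) * S * (L^-1 / L) = S / (2 * L).
  by field; rewrite gt_eqF.
rewrite H3 in H2.
have H4 : S / (2 * L) <= fx - m by lra.
by rewrite mulrC -ler_pdivrMr ?mulr_gt0.
Qed.


Lemma taylor1 (g g1 g2 : R -> R) M :
  (forall u : R, is_derive u (1:R) g (g1 u)) ->
  (forall u : R, is_derive u (1:R) g1 (g2 u)) ->
  (forall u, g2 u <= M) -> g 1 - g 0 - g1 0 <= M / 2.
Proof.
move=> dg dg1 hM.
have EE : forall (F1 F2 : R -> R) u, (F1 + F2) u = F1 u + F2 u by [].
have chi : forall u : R, 0 <= u -> g1 u - M * u <= g1 0.
  move=> u u0.
  have Hd : forall s : R, is_derive s (1:R) (g1 + (fun v : R => (- M) * v + 0 * (v * v)))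
     (g2 s + (- M + 2 * 0 * s)).
    by move=> s; apply: is_deriveD; last exact: quad_derive.
  have := mono_le u0 Hd.
  rewrite !EE !mul0r !mulr0 !addr0 mulNr => /(_ _); apply => s _.
  by rewrite mul0r addr0; have := hM s; lra.
have Hd : forall s : R, is_derive s (1:R) (g + (fun v : R => (- g1 0) * v + (- (M / 2)) * (v * v)))
     (g1 s + (- g1 0 + 2 * (- (M / 2)) * s)).
  by move=> s; apply: is_deriveD; last exact: quad_derive.
have := mono_le ler01 Hd.
rewrite !EE !mul0r !mulr0 !addr0 !mulr1.
have H : forall s : R, 0 < s < 1 -> g1 s + (- g1 0 + 2 * - (M / 2) * s) <= 0.
  move=> s /andP [s0 _]; have := chi s (ltW s0).
  have -> : 2 * - (M / 2) * s = - (M * s) by field.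
  lra.
move=> /(_ H); lra.
Qed.

Lemma taylor2 (g g1 g2 : R -> R) M :
  (forall u : R, is_derive u (1:R) g (g1 u)) ->
  (forall u : R, is_derive u (1:R) g1 (g2 u)) ->
  (forall u, `| g2 u | <= M) -> (g 1 - g 0 - g1 0) ^+ 2 <= (M / 2) ^+ 2.
Proof.
move=> dg dg1 hM.
have H1 := taylor1 dg dg1 (fun u => le_trans (ler_norm _) (hM u)).
have hM' : forall u, (- g2) u <= M.
  move=> u; apply: le_trans (hM u); rewrite -normrN; exact: ler_norm.
have H2 := @taylor1 (- g) (- g1) (- g2) M (fun u => is_deriveN (dg u))
   (fun u => is_deriveN (dg1 u)) hM'.
have E : forall (F : R -> R) u, (- F) u = - F u by [].
rewrite !E in H2.
have M0 : 0 <= M by apply: le_trans (hM 0); exact: normr_ge0.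
set X := g 1 - g 0 - g1 0 in H1 *.
have H3 : - (M / 2) <= X by rewrite /X; lra.
nra.
Qed.


Lemma sqnormN k (v : 'cV[R]_k) : sqnorm (- v) = sqnorm v.
Proof. by apply: eq_bigr => j _; rewrite mxE sqrrN. Qed.

Lemma taylor_coord k (f : 'cV[R]_k -> R) (G : R) (w v : 'cV[R]_k) (eta : R) :
  C2 f -> (forall x, opnorm_le (hessmx f x) G) ->
  (f (w - eta *: v) - f w + eta * \sum_(l < k) 'D_(ebase R l) f w * v l 0) ^+ 2
   <= (G * (eta ^+ 2 * sqnorm v) / 2) ^+ 2.
Proof.
move=> [df [dD _]] hH.
set dv := (- eta) *: v.
pose g := fun s : R => f (w + s *: dv).
pose Dk := fun (l : 'I_k) (y : 'cV[R]_k) => 'D_(ebase R l) f y.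
pose g1 := \sum_(l < k) (dv l 0 \*: (fun s : R => Dk l (w + s *: dv))).
pose g2 := fun s : R => dotv dv (hessmx f (w + s *: dv) *m dv).
have g1E : forall s, g1 s = \sum_(l < k) dv l 0 * Dk l (w + s *: dv).
  by move=> s; rewrite /g1 fct_sumE.
have dg : forall u : R, is_derive u (1:R) g (g1 u).
  move=> u; rewrite g1E.
  have -> : \sum_(l < k) dv l 0 * Dk l (w + u *: dv) = 'D_dv f (w + u *: dv).
    by rewrite dirD //; apply: eq_bigr => l _; rewrite !mxE.
  by apply: line_derive; exact: diff_derivable.
have dg1 : forall u : R, is_derive u (1:R) g1 (g2 u).
  move=> u.
  have Hl : forall l, is_derive u (1:R) (dv l 0 \*: (fun s : R => Dk l (w + s *: dv)))
      (dv l 0 *: 'D_dv (Dk l) (w + u *: dv)).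
    by move=> l; apply: is_deriveZ; apply: line_derive; apply: diff_derivable; exact: dD.
  apply: is_derive_eq (is_derive_sum Hl) _.
  rewrite /g2 /dotv; apply: eq_bigr => l _.
  rewrite dirD; last exact: dD.
  rewrite -[dv l 0 *: _]/(dv l 0 * _) /dotv; congr (_ * _).
  rewrite mxE; apply: eq_bigr => m _.
  by rewrite mulrC [gradv _ _ _ _]mxE [hessmx _ _ _ _]mxE.
have hM : forall u, `| g2 u | <= G * sqnorm dv.
  move=> u; rewrite ler_norml; set y := w + u *: dv.
  have H1 := hH y dv.
  have H2 := CS dv (hessmx f y *m dv).
  have H3 := CS (- dv) (hessmx f y *m dv).
  rewrite dotvNl /enorm sqnormN -/(enorm dv) -/(enorm (hessmx f y *m dv)) in H3.
  have H4 : enorm dv * enorm (hessmx f y *m dv) <= G * sqnorm dv.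
    rewrite -enorm_sq mulrCA; apply: ler_wpM2l; last exact: H1.
    exact: sqrtr_ge0.
  rewrite /g2 -/y; apply/andP; split; lra.
have := taylor2 dg dg1 hM.
rewrite /g g1E scale0r addr0 scale1r.
have -> : sqnorm dv = eta ^+ 2 * sqnorm v by rewrite /dv sqnormZ sqrrN.
have -> : w + dv = w - eta *: v by rewrite /dv scaleNr.
have -> : \sum_(l < k) dv l 0 * Dk l w = - (eta * \sum_(l < k) 'D_(ebase R l) f w * v l 0).
  rewrite mulr_sumr -sumrN; apply: eq_bigr => l _.
  by rewrite /Dk /dv !mxE; ring.
by rewrite opprK.
Qed.


Lemma term_bound (eps p a g e r : R) : 0 < eps ->
  (p - a * g - e + r) ^+ 2 <= (1 + eps) * p ^+ 2 - 2 * a * (p * g) + 3 * (a ^+ 2 * g ^+ 2)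
     + (2 / eps + 3) * (e ^+ 2 + r ^+ 2).
Proof.
move=> ep.
have E : (1 + eps) * p ^+ 2 - 2 * a * (p * g) + 3 * (a ^+ 2 * g ^+ 2)
     + (2 / eps + 3) * (e ^+ 2 + r ^+ 2) - (p - a * g - e + r) ^+ 2
  = (eps * p + (e - r)) ^+ 2 / eps + (2 * a * g - (e - r)) ^+ 2 / 2
    + (1 / eps + 3 / 2) * (e + r) ^+ 2.
  by field; rewrite gt_eqF.
rewrite -subr_ge0 E.
apply: addr_ge0; first apply: addr_ge0.
- by apply: divr_ge0; [exact: sqr_ge0 | exact: ltW].
- by apply: divr_ge0; [exact: sqr_ge0 | ].
- apply: mulr_ge0; last exact: sqr_ge0.
  by apply: addr_ge0; apply: divr_ge0 => //; exact: ltW.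
Qed.

End H.
Unset Implicit Arguments. Set Strict Implicit. Set Printing Implicit Defensive.

Theorem mainTheorem12 (R : realType) (n c d T : nat)
  (h : 'I_n -> 'cV[R]_d -> 'cV[R]_c) (phi : 'I_n -> 'cV[R]_c -> R)
  (hstar : 'I_n -> 'cV[R]_c) (Lphi G V eps D alpha : R)
  (eta : nat -> R) (alph : nat -> 'I_n -> R)
  (w : nat -> 'cV[R]_d) (vreg : nat -> 'cV[R]_d) :
  (0 < n)%N -> (0 < c)%N -> (0 < d)%N ->
  (* minimizers of phi_i *)
  (forall i x, phi i (hstar i) <= phi i x) ->
  (* Assumption A *)
  0 < Lphi ->
  (forall i, convex_fun (phi i) /\ bounded_below (phi i) /\ L_smooth Lphi (phi i)) ->
  (* Assumption B *)
  0 < G ->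
  (forall i (j : 'I_c), C2 (coordf (h i) j)) ->
  (forall i (j : 'I_c) x, opnorm_le (hessmx (coordf (h i) j) x) G) ->
  (* iteration setup *)
  0 < eps -> 0 < D ->
  (forall t, eta t = D * Num.sqrt eps) ->
  (forall t i, 0 < alph t i) ->
  (* Algorithm 1: vreg t is the (unique) minimizer of Psi^{(t)} *)
  (forall t, (t < T)%N -> forall u : 'cV[R]_d,
     Psi eps (eta t) (alph t) (fun i => jacmx (h i) (w t))
         (fun i => gradv (phi i) (h i (w t))) (vreg t)
     <= Psi eps (eta t) (alph t) (fun i => jacmx (h i) (w t))
         (fun i => gradv (phi i) (h i (w t))) u) ->
  (forall t, (t < T)%N -> w t.+1 = w t - eta t *: vreg t) ->
  (* Assumption C *)
  0 < V ->
  (forall t, (t < T)%N -> exists vhat : 'cV[R]_d,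
     sqnorm vhat <= V /\
     Phi (eta t) (alph t) (fun i => jacmx (h i) (w t))
         (fun i => gradv (phi i) (h i (w t))) vhat <= eps ^+ 2) ->
  (* step sizes *)
  0 < alpha -> alpha < 3^-1 ->
  (forall t i, (t < T)%N -> alph t i <= alpha / Lphi) ->
  forall (i : 'I_n) (t : nat), (t < T)%N ->
    sqnorm (h i (w t.+1) - hstar i)
    <= (1 + eps) * sqnorm (h i (w t) - hstar i)
       - 2 * (1 - 3 * alpha) * alph t i * (phi i (h i (w t)) - phi i (hstar i))
       + (3 * eps + 2) / 4 * c%:R * (4 + (V + 2) * G * D ^+ 2) ^+ 2 * eps
       + (3 * eps + 2) / eps
         * sqnorm (eta t *: (jacmx (h i) (w t) *m vreg t)
                   - alph t i *: gradv (phi i) (h i (w t))).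
Proof.
move=> n0 c0 d0 hmin Lp hA Gp hC2 hH ep Dp heta halph hpsi hw Vp hCc al0 al3 halb i t tT.
have [cvx [_ sm]] := hA i.
have hdiff : forall y, differentiable (phi i) y by case: sm.
have hv : sqnorm (vreg t) <= V + 2.
  have [vh [vhV vhP]] := hCc t tT.
  have := hpsi t tT vh; rewrite /Psi.
  set P1 := Phi _ _ _ _ (vreg t); set P2 := Phi _ _ _ _ vh => H.
  have P1ge : 0 <= P1.
    rewrite /P1 /Phi; apply: mulr_ge0.
      by rewrite invr_ge0 mulr_ge0 // ler0n.
    by apply: sumr_ge0 => j _; exact: sqnorm_ge0.
  have K0 : 0 < eps ^+ 2 / 2 by rewrite divr_gt0 // exprn_gt0.
  have H2 : eps ^+ 2 / 2 * sqnorm vh <= eps ^+ 2 / 2 * V by rewrite ler_wpM2l // ltW.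
  have H3 : eps ^+ 2 / 2 * sqnorm (vreg t) <= eps ^+ 2 / 2 * (V + 2).
    have -> : eps ^+ 2 / 2 * (V + 2) = eps ^+ 2 / 2 * V + eps ^+ 2 by field.
    have vhP2 : P2 <= eps ^+ 2 by exact: vhP.
    lra.
  by rewrite -(ler_pM2l K0).
set x := h i (w t).
set g := gradv (phi i) x.
set a := alph t i.
set J := jacmx (h i) (w t).
set v := vreg t.
have et2 : eta t ^+ 2 = D ^+ 2 * eps by rewrite heta exprMn sqr_sqrtr // ltW.
pose B := G * (D ^+ 2 * eps * (V + 2)) / 2.
have B0 : 0 <= B.
  rewrite /B; apply: divr_ge0 => //; apply: mulr_ge0; first exact: ltW.
  apply: mulr_ge0; last lra.
  by apply: mulr_ge0; [exact: sqr_ge0 | exact: ltW].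
pose r := fun j : 'I_c => h i (w t.+1) j 0 - x j 0 + eta t * (J *m v) j 0.
have hr : forall j, r j ^+ 2 <= B ^+ 2.
  move=> j.
  have := taylor_coord (G := G) (w t) v (eta t) (hC2 i j) (hH i j).
  have -> : \sum_(l < d) 'D_(ebase R l) (coordf (h i) j) (w t) * v l 0 = (J *m v) j 0.
    by rewrite [RHS]mxE; apply: eq_bigr => l _; rewrite /J mxE.
  rewrite -(hw t tT) /coordf -/x -/(r j) => H.
  apply: le_trans H _.
  rewrite et2.
  have Hb : 0 <= G * (D ^+ 2 * eps * sqnorm v) / 2.
    apply: divr_ge0 => //; apply: mulr_ge0; first exact: ltW.
    apply: mulr_ge0; last exact: sqnorm_ge0.
    by apply: mulr_ge0; [exact: sqr_ge0 | exact: ltW].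
  have XB : G * (D ^+ 2 * eps * sqnorm v) / 2 <= B.
    rewrite /B; apply: ler_wpM2r => //; apply: ler_wpM2l; first exact: ltW.
    apply: ler_wpM2l; last exact: hv.
    by apply: mulr_ge0; [exact: sqr_ge0 | exact: ltW].
  by rewrite !expr2; apply: (ler_pM Hb Hb XB XB).
have hRr : \sum_(j < c) r j ^+ 2 <= c%:R * B ^+ 2.
  apply: le_trans (ler_sum _ (fun j _ => hr j)) _.
  by rewrite sumr_const card_ord mulr_natl.
set ph := phi i x - phi i (hstar i).
have hph0 : 0 <= ph by rewrite /ph subr_ge0.
set P := sqnorm (x - hstar i).
set PG := dotv (x - hstar i) g.
set S := sqnorm g.
set E := sqnorm (eta t *: (J *m v) - a *: g).
have hconv : ph <= PG.
  have := convex_grad (hstar i) cvx (hdiff x).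
  rewrite /PG -opprB dotvNl /ph -/g; lra.
have hS : S <= 2 * Lphi * ph by apply: grad_bound => //; exact: hmin.
have a0 : 0 < a by exact: halph.
have hab : a <= alpha / Lphi by exact: halb.
have S0 : 0 <= S by exact: sqnorm_ge0.
have haS : a * S <= 2 * alpha * ph.
  apply: le_trans (ler_wpM2r S0 hab) _.
  apply: le_trans (ler_wpM2l _ hS) _; first by rewrite divr_ge0 // ltW.
  rewrite le_eqVlt; apply/orP; left; apply/eqP; field; rewrite gt_eqF //.
have hmain : sqnorm (h i (w t.+1) - hstar i) <=
   (1 + eps) * P - 2 * a * PG + 3 * (a ^+ 2 * S) + (2 / eps + 3) * (E + \sum_(j < c) r j ^+ 2).
  have -> : (1 + eps) * P - 2 * a * PG + 3 * (a ^+ 2 * S) + (2 / eps + 3) * (E + \sum_(j < c) r j ^+ 2)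
    = \sum_(j < c) ((1 + eps) * (x j 0 - hstar i j 0) ^+ 2
         - 2 * a * ((x j 0 - hstar i j 0) * g j 0) + 3 * (a ^+ 2 * g j 0 ^+ 2)
     + (2 / eps + 3) * ((eta t * (J *m v) j 0 - a * g j 0) ^+ 2 + r j ^+ 2)).
    rewrite !big_split /= sumrN -!mulr_sumr big_split /=.
    rewrite /P /PG /S /E /sqnorm /dotv.
    congr (_ * _ - _ * _ + _ * (_ * _) + _ * (_ + _)).
    + by apply: eq_bigr => j _; rewrite !mxE.
    + by apply: eq_bigr => j _; rewrite !mxE.
    + by apply: eq_bigr => j _; rewrite !mxE.
  rewrite /sqnorm; apply: ler_sum => j _.
  have -> : (h i (w t.+1) - hstar i) j 0
      = (x j 0 - hstar i j 0) - a * g j 0 - (eta t * (J *m v) j 0 - a * g j 0) + r j.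
    by rewrite /r !mxE; ring.
  exact: term_bound.
set Rr := \sum_(j < c) r j ^+ 2 in hRr hmain.
have h1 : a * ph <= a * PG by apply: ler_wpM2l => //; exact: ltW.
have h2 : a * (a * S) <= a * (2 * alpha * ph) by apply: ler_wpM2l => //; exact: ltW.
have k0 : 0 <= 2 / eps + 3 by apply: addr_ge0 => //; apply: divr_ge0 => //; exact: ltW.
have h3 : (2 / eps + 3) * Rr <= (2 / eps + 3) * (c%:R * B ^+ 2) by apply: ler_wpM2l.
set X := (V + 2) * G * D ^+ 2.
have X0 : 0 <= X.
  by rewrite /X; apply: mulr_ge0; [apply: mulr_ge0; [lra | exact: ltW] | exact: sqr_ge0].
have h4 : (2 / eps + 3) * (c%:R * B ^+ 2) = (3 * eps + 2) / 4 * c%:R * X ^+ 2 * eps.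
  by rewrite /B /X; field; rewrite gt_eqF.
have h5 : (3 * eps + 2) / 4 * c%:R * X ^+ 2 * eps <= (3 * eps + 2) / 4 * c%:R * (4 + X) ^+ 2 * eps.
  apply: ler_wpM2r; first exact: ltW.
  apply: ler_wpM2l.
    by apply: mulr_ge0; [apply: divr_ge0; lra | exact: ler0n].
  rewrite !expr2; apply: ler_pM => //; lra.
have h6 : (2 / eps + 3) * E = (3 * eps + 2) / eps * E by congr (_ * _); field; rewrite gt_eqF.
rewrite -h6.
have e1 : (1 + eps) * P - 2 * a * PG + 3 * (a ^+ 2 * S) + (2 / eps + 3) * (E + Rr)
   = (1 + eps) * P - 2 * (a * PG) + 3 * (a * (a * S)) + (2 / eps + 3) * E + (2 / eps + 3) * Rr.
  by ring.
rewrite e1 in hmain.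
have e2 : 2 * (1 - 3 * alpha) * a * ph = 2 * (a * ph) - 3 * (a * (2 * alpha * ph)) by ring.
rewrite e2.
lra.
Qed.
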